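(* Let $\ell:K(H\times\mathrm{Id})\to HM$ be an abstract GSOS rule with $\ell$-interpretation $b$, let $k=c^{-1}\cdot Hb^\sharp:HMC\to C$, let $V$ be an endofunctor with $HM+V$ iteratable. Then every guarded recursive program scheme $e:V\to T^{HM+V}$ has a unique interpreted solution $s:VC\to C$ in the cia $(C,k)$, and $[k,s]:(HM+V)C\to C$ is a completely iterative algebra for $HM+V$.
   Context: Let $\mathcal A$ be a category with binary products and coproducts, let $H:\mathcal A\to\mathcal A$ be a functor with a terminal coalgebra $c:C\to HC$ (an isomorphism by Lambek's lemma), and let $K:\mathcal A\to\mathcal A$ be a functor such that every object $X$ has a free $K$-algebra $\varphi_X:KMX\to MX$ with universal morphism $\eta_X:X\to MX$; $(M,\eta,\mu)$ is the free monad on $K$. For a $K$-algebra $a:KA\to A$ let $a^\sharp:MA\to A$ be the unique $K$-algebra homomorphism with $a^\sharp\cdot\eta_A=\mathrm{id}_A$. An abstract GSOS rule is a natural transformation $\ell:K(H\times\mathrm{Id})\to HM$; its $\ell$-interpretation is the unique $b:KC\to C$ with $c\cdot b=Hb^\sharp\cdot\ell_C\cdot K\langle c,\mathrm{id}_C\rangle$. A $G$-algebra $a:GA\to A$ is a completely iterative algebra (cia) if every $e:X\to GX+A$ has a unique $e^\dagger:X\to A$ with $e^\dagger=[a,\mathrm{id}_A]\cdot(Ge^\dagger+\mathrm{id}_A)\cdot e$; $(C,k)$ is a cia for $HM$. An endofunctor $G$ is iteratable if for each $X$ a terminal coalgebra $T^GX$ for $G(-)+X$ exists, with inverse structure $[\tau^G_X,\eta^G_X]$;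 $T^G$ is a monad and $\kappa^G=\tau^G\cdot G\eta^G$. For an endofunctor $L$ with cia $(A,a)$ for $L$ and $L+V$ iteratable: a recursive program scheme is a natural transformation $e:V\to T^{L+V}$; it is guarded if $e=\tau^{L+V}\cdot(\mathrm{inl}\,T^{L+V})\cdot f$ for some natural $f:V\to LT^{L+V}$; an interpreted solution of $e$ in $(A,a)$ is a $V$-algebra $s:VA\to A$ for which there is an Eilenberg–Moore algebra $\beta:T^{L+V}A\to A$ for $T^{L+V}$ with $\beta\cdot\kappa^{L+V}_A=[a,s]$ and $s=\beta\cdot e_A$. Here $L=HM$. *)

(* Defs.v *)
From Stdlib Require Import Setoid.

Set Implicit Arguments.
Unset Strict Implicit.

Record Category := {
  Ob :> Type;
  Hom : Ob -> Ob -> Type;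
  idm : forall X, Hom X X;
  comp : forall X Y Z, Hom Y Z -> Hom X Y -> Hom X Z;
  comp_id_l : forall X Y (f : Hom X Y), comp (idm Y) f = f;
  comp_id_r : forall X Y (f : Hom X Y), comp f (idm X) = f;
  comp_assoc : forall X Y Z W (f : Hom Z W) (g : Hom Y Z) (h : Hom X Y),
      comp f (comp g h) = comp (comp f g) h
}.

Arguments Hom {c} X Y.
Arguments idm {c} X.
Arguments comp {c X Y Z} g f.
Arguments comp_id_l {c X Y} f.
Arguments comp_id_r {c X Y} f.
Arguments comp_assoc {c X Y Z W} f g h.

Notation "g ∘ f" := (comp g f) (at level 40, left associativity).

Record Functor (A B : Category) := {
  fobj :> A -> B;
  fmap : forall X Y : A, Hom X Y -> Hom (fobj X) (fobj Y);
  fmap_id : forall X : A, fmap (idm X) = idm (fobj X);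
  fmap_comp : forall (X Y Z : A) (g : Hom Y Z) (f : Hom X Y),
      fmap (g ∘ f) = fmap g ∘ fmap f
}.

Arguments fmap {A B} _ {X Y} _.

Record Products (A : Category) := {
  prod : A -> A -> A;
  pr1 : forall X Y, Hom (prod X Y) X;
  pr2 : forall X Y, Hom (prod X Y) Y;
  pair : forall Z X Y, Hom Z X -> Hom Z Y -> Hom Z (prod X Y);
  pair_pr1 : forall Z X Y (f : Hom Z X) (g : Hom Z Y), pr1 X Y ∘ pair f g = f;
  pair_pr2 : forall Z X Y (f : Hom Z X) (g : Hom Z Y), pr2 X Y ∘ pair f g = g;
  pair_unique : forall Z X Y (f : Hom Z X) (g : Hom Z Y) (h : Hom Z (prod X Y)),
      pr1 X Y ∘ h = f -> pr2 X Y ∘ h = g -> h = pair f g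
}.

Record Coproducts (A : Category) := {
  cop : A -> A -> A;
  cinl : forall X Y, Hom X (cop X Y);
  cinr : forall X Y, Hom Y (cop X Y);
  copair : forall X Y Z, Hom X Z -> Hom Y Z -> Hom (cop X Y) Z;
  copair_inl : forall X Y Z (f : Hom X Z) (g : Hom Y Z), copair f g ∘ cinl X Y = f;
  copair_inr : forall X Y Z (f : Hom X Z) (g : Hom Y Z), copair f g ∘ cinr X Y = g;
  copair_unique : forall X Y Z (f : Hom X Z) (g : Hom Y Z) (h : Hom (cop X Y) Z),
      h ∘ cinl X Y = f -> h ∘ cinr X Y = g -> h = copair f g
}.

Arguments prod {A} _ X Y.
Arguments pr1 {A} _ X Y.
Arguments pr2 {A} _ X Y.
Arguments pair {A} _ {Z X Y} f g.
Arguments cop {A} _ X Y.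
Arguments cinl {A} _ X Y.
Arguments cinr {A} _ X Y.
Arguments copair {A} _ {X Y Z} f g.

Unset Implicit Arguments.

Section Constructions.
Context {A : Category} (S : Coproducts A).

Definition copmap {X Y X' Y'} (f : Hom X X') (g : Hom Y Y') :
  Hom (cop S X Y) (cop S X' Y') :=
  copair S (cinl S X' Y' ∘ f) (cinr S X' Y' ∘ g).

Lemma copmap_id X Y : copmap (idm X) (idm Y) = idm (cop S X Y).
Proof.
  symmetry; apply copair_unique; rewrite comp_id_l, comp_id_r; reflexivity.
Qed.

Lemma copmap_comp X Y X' Y' X'' Y'' (f : Hom X X') (g : Hom Y Y')
  (f' : Hom X' X'') (g' : Hom Y' Y'') :
  copmap (f' ∘ f) (g' ∘ g) = copmap f' g' ∘ copmap f g.
Proof.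
  unfold copmap; symmetry; apply copair_unique.
  - rewrite <- comp_assoc, copair_inl, comp_assoc, copair_inl, comp_assoc.
    reflexivity.
  - rewrite <- comp_assoc, copair_inr, comp_assoc, copair_inr, comp_assoc.
    reflexivity.
Qed.

Definition CopF (F G : Functor A A) : Functor A A.
Proof.
  refine {| fobj := fun X => cop S (F X) (G X);
            fmap := fun X Y f => copmap (fmap F f) (fmap G f) |}.
  - intros X; rewrite !fmap_id; apply copmap_id.
  - intros X Y Z g f; rewrite !fmap_comp; apply copmap_comp.
Defined.

Definition ConstF (X : A) : Functor A A.
Proof.
  refine {| fobj := fun _ => X; fmap := fun _ _ _ => idm X |}.
  - reflexivity.
  - intros; symmetry; apply comp_id_l.
Defined.

End Constructions.

Definition FComp {A : Category} (F G : Functor A A) : Functor A A.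
Proof.
  refine {| fobj := fun X => F (G X); fmap := fun X Y f => fmap F (fmap G f) |}.
  - intros X; rewrite !fmap_id; reflexivity.
  - intros X Y Z g f; rewrite !fmap_comp; reflexivity.
Defined.

Record TerminalCoalgebra {A : Category} (F : Functor A A) := {
  tc_car : A;
  tc_str : Hom tc_car (F tc_car);
  tc_unfold : forall {X}, Hom X (F X) -> Hom X tc_car;
  tc_unfold_hom : forall X (x : Hom X (F X)),
      tc_str ∘ tc_unfold x = fmap F (tc_unfold x) ∘ x;
  tc_unfold_unique : forall X (x : Hom X (F X)) (h : Hom X tc_car),
      tc_str ∘ h = fmap F h ∘ x -> h = tc_unfold x
}.

Arguments tc_car {A F} _.
Arguments tc_str {A F} _.
Arguments tc_unfold {A F} _ {X} x.

(* The inverse of the structure map (Lambek's lemma): the unique coalgebra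
   morphism from (F C, F c) to (C, c). *)
Definition tc_inv {A : Category} {F : Functor A A} (t : TerminalCoalgebra F) :
  Hom (F (tc_car t)) (tc_car t) :=
  tc_unfold t (fmap F (tc_str t)).

Record FreeMonadOn {A : Category} (K : Functor A A) := {
  FM : Functor A A;
  fm_eta : forall X, Hom X (FM X);
  fm_phi : forall X, Hom (K (FM X)) (FM X);
  fm_eta_nat : forall X Y (f : Hom X Y), fmap FM f ∘ fm_eta X = fm_eta Y ∘ f;
  fm_phi_nat : forall X Y (f : Hom X Y),
      fmap FM f ∘ fm_phi X = fm_phi Y ∘ fmap K (fmap FM f);
  fm_ext : forall {X Y}, Hom (K Y) Y -> Hom X Y -> Hom (FM X) Y;
  fm_ext_eta : forall X Y (a : Hom (K Y) Y) (f : Hom X Y),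
      fm_ext a f ∘ fm_eta X = f;
  fm_ext_hom : forall X Y (a : Hom (K Y) Y) (f : Hom X Y),
      fm_ext a f ∘ fm_phi X = a ∘ fmap K (fm_ext a f);
  fm_ext_unique : forall X Y (a : Hom (K Y) Y) (f : Hom X Y) (h : Hom (FM X) Y),
      h ∘ fm_eta X = f -> h ∘ fm_phi X = a ∘ fmap K h -> h = fm_ext a f
}.

Arguments FM {A K} _.
Arguments fm_eta {A K} _ X.
Arguments fm_phi {A K} _ X.
Arguments fm_ext {A K} _ {X Y} a f.

Definition sharp {A : Category} {K : Functor A A} (m : FreeMonadOn K)
  {Y : A} (a : Hom (K Y) Y) : Hom (FM m Y) Y := fm_ext m a (idm Y).

Section GSOS.
Context {A : Category} (P : Products A) (H K : Functor A A) (m : FreeMonadOn K).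

Definition is_GSOS_rule
  (l : forall X, Hom (K (prod P (H X) X)) (H (FM m X))) : Prop :=
  forall X Y (f : Hom X Y),
    fmap H (fmap (FM m) f) ∘ l X
    = l Y ∘ fmap K (pair P (fmap H f ∘ pr1 P (H X) X) (f ∘ pr2 P (H X) X)).

Definition interpretation_eq (t : TerminalCoalgebra H)
  (l : forall X, Hom (K (prod P (H X) X)) (H (FM m X)))
  (b : Hom (K (tc_car t)) (tc_car t)) : Prop :=
  tc_str t ∘ b
  = fmap H (sharp m b) ∘ l (tc_car t) ∘ fmap K (pair P (tc_str t) (idm (tc_car t))).

Definition is_interpretation (t : TerminalCoalgebra H)
  (l : forall X, Hom (K (prod P (H X) X)) (H (FM m X)))
  (b : Hom (K (tc_car t)) (tc_car t)) : Prop :=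
  interpretation_eq t l b /\
  forall b', interpretation_eq t l b' -> b' = b.

End GSOS.

Section Iteration.
Context {A : Category} (S : Coproducts A).

Definition is_cia (G : Functor A A) {X : A} (a : Hom (G X) X) : Prop :=
  forall (Y : A) (e : Hom Y (cop S (G Y) X)),
    exists! h : Hom Y X, h = copair S a (idm X) ∘ copmap S (fmap G h) (idm X) ∘ e.

Definition Iteratable (G : Functor A A) : Type :=
  forall X : A, TerminalCoalgebra (CopF S G (ConstF X)).

Context {G : Functor A A} (It : Iteratable G).

Definition TG (X : A) : A := tc_car (It X).
Definition outG (X : A) : Hom (TG X) (cop S (G (TG X)) X) := tc_str (It X).
Definition inG (X : A) : Hom (cop S (G (TG X)) X) (TG X) := tc_inv (It X).
Definition tauG (X : A) : Hom (G (TG X)) (TG X) := inG X ∘ cinl S (G (TG X)) X.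
Definition etaG (X : A) : Hom X (TG X) := inG X ∘ cinr S (G (TG X)) X.
Definition kappaG (X : A) : Hom (G X) (TG X) := tauG X ∘ fmap G (etaG X).

Definition TGmap {X Y : A} (f : Hom X Y) : Hom (TG X) (TG Y) :=
  tc_unfold (It Y) (copmap S (idm (G (TG X))) f ∘ outG X).

(* multiplication mu_X : T T X -> T X of the monad T^G: the unique morphism
   with mu . eta_{TX} = id and mu . tau_{TX} = tau_X . G mu, obtained as
   f . inl where f : TTX + TX -> TX is the coalgebra morphism out of delta *)
Definition muG (X : A) : Hom (TG (TG X)) (TG X) :=
  let TX := TG X in
  let TTX := TG TX in
  let base := copmap S (fmap G (cinr S TTX TX)) (idm X) ∘ outG X in
  let delta : Hom (cop S TTX TX) (cop S (G (cop S TTX TX)) X) :=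
      copair S (copair S (cinl S (G (cop S TTX TX)) X ∘ fmap G (cinl S TTX TX)) base
                 ∘ outG TX) base in
  tc_unfold (It X) delta ∘ cinl S TTX TX.

Definition is_EM_algebra {X : A} (beta : Hom (TG X) X) : Prop :=
  beta ∘ etaG X = idm X /\ beta ∘ muG X = beta ∘ TGmap beta.

End Iteration.

Section RPS.
Context {A : Category} (S : Coproducts A) (L V : Functor A A)
        (It : Iteratable S (CopF S L V)).

Definition is_rps (e : forall X, Hom (V X) (TG S It X)) : Prop :=
  forall X Y (f : Hom X Y), TGmap S It f ∘ e X = e Y ∘ fmap V f.

Definition is_guarded_rps (e : forall X, Hom (V X) (TG S It X)) : Prop :=
  exists f : forall X, Hom (V X) (L (TG S It X)),
    (forall X Y (g : Hom X Y), fmap L (TGmap S It g) ∘ f X = f Y ∘ fmap V g) /\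
    (forall X, e X = tauG S It X ∘ cinl S (L (TG S It X)) (V (TG S It X)) ∘ f X).

Definition is_interpreted_solution (e : forall X, Hom (V X) (TG S It X))
  {X : A} (a : Hom (L X) X) (s : Hom (V X) X) : Prop :=
  exists beta : Hom (TG S It X) X,
    is_EM_algebra S It beta /\
    beta ∘ kappaG S It X = copair S a s /\
    s = beta ∘ e X.

End RPS.

(* Main.v *)
Require Import Defs.
From Stdlib Require Import Setoid.

Section Basics.
Context {A : Category}.
Implicit Types X Y Z W : Ob A.

Lemma ra_lem {X Y Z} {f : Hom Y Z} {g : Hom X Y} {h : Hom X Z} (E : f ∘ g = h)
  {W} (x : Hom W X) : f ∘ (g ∘ x) = h ∘ x.
Proof. rewrite comp_assoc, E; reflexivity. Qed.

Lemma fmap_comp' (F : Functor A A) {X Y Z W} (g : Hom Y Z) (f : Hom X Y) (x : Hom W (F X)) :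
  fmap F g ∘ (fmap F f ∘ x) = fmap F (g ∘ f) ∘ x.
Proof. rewrite fmap_comp, comp_assoc; reflexivity. Qed.

Context (S : Coproducts A).

Lemma cinl' {X Y Z W} (f : Hom X Z) (g : Hom Y Z) (x : Hom W X) :
  copair S f g ∘ (cinl S X Y ∘ x) = f ∘ x.
Proof. rewrite comp_assoc, copair_inl; reflexivity. Qed.
Lemma cinr' {X Y Z W} (f : Hom X Z) (g : Hom Y Z) (x : Hom W Y) :
  copair S f g ∘ (cinr S X Y ∘ x) = g ∘ x.
Proof. rewrite comp_assoc, copair_inr; reflexivity. Qed.

Lemma copair_ext {X Y Z} (h k : Hom (cop S X Y) Z) :
  h ∘ cinl S X Y = k ∘ cinl S X Y -> h ∘ cinr S X Y = k ∘ cinr S X Y -> h = k.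
Proof.
  intros E1 E2. rewrite (@copair_unique _ S _ _ _ _ _ h eq_refl eq_refl).
  rewrite (@copair_unique _ S _ _ _ _ _ k eq_refl eq_refl), E1, E2; reflexivity.
Qed.

Lemma copair_comp {X Y Z Z' : A} (h : Hom Z Z') (f : Hom X Z) (g : Hom Y Z) :
  h ∘ copair S f g = copair S (h ∘ f) (h ∘ g).
Proof.
  apply copair_unique; rewrite <- comp_assoc; [rewrite copair_inl | rewrite copair_inr]; reflexivity.
Qed.
Lemma copair_comp' {X Y Z Z' W : A} (h : Hom Z Z') (f : Hom X Z) (g : Hom Y Z) (x : Hom W _):
  h ∘ (copair S f g ∘ x) = copair S (h ∘ f) (h ∘ g) ∘ x.
Proof. rewrite comp_assoc, copair_comp; reflexivity. Qed.

Lemma copair_eta {X Y Z} (h : Hom (cop S X Y) Z) : copair S (h ∘ cinl S X Y) (h ∘ cinr S X Y) = h.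
Proof. symmetry; apply copair_unique; reflexivity. Qed.

Lemma copair_id {X Y} : copair S (cinl S X Y) (cinr S X Y) = idm _.
Proof. symmetry; apply copair_unique; apply comp_id_l. Qed.

End Basics.

Section Prods.
Context {A : Category} (P : Products A).
Implicit Types X Y Z W : Ob A.
Lemma pair_comp {Z Z' X Y : A} (f : Hom Z X) (g : Hom Z Y) (h : Hom Z' Z) :
  pair P f g ∘ h = pair P (f ∘ h) (g ∘ h).
Proof.
  apply pair_unique; rewrite comp_assoc; [rewrite pair_pr1 | rewrite pair_pr2]; reflexivity.
Qed.
Lemma pr1' {Z X Y W} (f : Hom Z X) (g : Hom Z Y) (x : Hom W Z) :
  pr1 P X Y ∘ (pair P f g ∘ x) = f ∘ x.
Proof. rewrite comp_assoc, pair_pr1; reflexivity. Qed.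
Lemma pr2' {Z X Y W} (f : Hom Z X) (g : Hom Z Y) (x : Hom W Z) :
  pr2 P X Y ∘ (pair P f g ∘ x) = g ∘ x.
Proof. rewrite comp_assoc, pair_pr2; reflexivity. Qed.
Lemma pair_eta {Z X Y} (h : Hom Z (prod P X Y)) : pair P (pr1 P X Y ∘ h) (pr2 P X Y ∘ h) = h.
Proof. symmetry; apply pair_unique; reflexivity. Qed.
End Prods.

Lemma fmap_CopF {A : Category} (S : Coproducts A) (F G : Functor A A) {X Y : A} (f : Hom X Y) :
  fmap (CopF S F G) f = copmap S (fmap F f) (fmap G f).
Proof. reflexivity. Qed.
Lemma fmap_ConstF {A : Category} (Z : A) {X Y : A} (f : Hom X Y) :
  fmap (ConstF Z) f = idm Z.
Proof. reflexivity. Qed.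
Lemma fmap_FComp {A : Category} (F G : Functor A A) {X Y : A} (f : Hom X Y) :
  fmap (FComp F G) f = fmap F (fmap G f).
Proof. reflexivity. Qed.

Section TC.
Context {A : Category} {F : Functor A A} (t : TerminalCoalgebra F).
Implicit Types X Y Z W : Ob A.

Lemma tc_ext {X} (x : Hom X (F X)) (h1 h2 : Hom X (tc_car t)) :
  tc_str t ∘ h1 = fmap F h1 ∘ x -> tc_str t ∘ h2 = fmap F h2 ∘ x -> h1 = h2.
Proof.
  intros E1 E2. rewrite (tc_unfold_unique F t _ x h1 E1), (tc_unfold_unique F t _ x h2 E2).
  reflexivity.
Qed.

Lemma tc_inv_str : tc_inv t ∘ tc_str t = idm _.
Proof.
  apply (tc_ext (tc_str t)).
  - unfold tc_inv. rewrite comp_assoc, (tc_unfold_hom F t), fmap_comp. reflexivity.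
  - rewrite comp_id_r, fmap_id, comp_id_l. reflexivity.
Qed.

Lemma tc_str_inv : tc_str t ∘ tc_inv t = idm _.
Proof.
  unfold tc_inv at 1. rewrite (tc_unfold_hom F t), <- fmap_comp. fold (tc_inv t).
  rewrite tc_inv_str, fmap_id. reflexivity.
Qed.
End TC.

Lemma copmap_def {A : Category} (S : Coproducts A) {X Y X' Y' : A} (f : Hom X X') (g : Hom Y Y') :
  copmap S f g = copair S (cinl S X' Y' ∘ f) (cinr S X' Y' ∘ g).
Proof. reflexivity. Qed.

Lemma pair_comp' {A : Category} (P : Products A) {Z Z' X Y W : A} (f : Hom Z X) (g : Hom Z Y) (h : Hom Z' Z) (x : Hom W Z') :
  pair P f g ∘ (h ∘ x) = pair P (f ∘ h) (g ∘ h) ∘ x.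
Proof. rewrite comp_assoc, pair_comp; reflexivity. Qed.

Lemma expand_l {A : Category} {X Y : A} (f : Hom X Y) : f = idm Y ∘ f.
Proof. rewrite comp_id_l; reflexivity. Qed.

Global Hint Rewrite <- @comp_assoc : cat.
Global Hint Rewrite <- @fmap_comp : cat.
Global Hint Rewrite @comp_id_l @comp_id_r @copair_inl @copair_inr @cinl' @cinr'
  @copair_comp @copair_comp' @pair_pr1 @pair_pr2 @pr1' @pr2' @pair_comp @pair_comp'
  @fmap_id @fmap_comp' @fmap_CopF @fmap_FComp @fmap_ConstF @copmap_def @copair_id @copair_eta : cat.

Ltac cs_in H := cbn [fobj fmap CopF ConstF FComp] in H; autorewrite with cat in H.
Ltac cs := cbn [fobj fmap CopF ConstF FComp] in *; autorewrite with cat.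

Ltac nf := cbn [fobj fmap CopF ConstF FComp] in *.
Tactic Notation "rw" uconstr(E) :=
  let HH := fresh "HH" in epose proof E as HH; cbn [fobj fmap CopF ConstF FComp] in HH;
  first [erewrite HH | erewrite (ra_lem HH)]; clear HH.
Tactic Notation "rw" "<-" uconstr(E) :=
  let HH := fresh "HH" in epose proof E as HH; cbn [fobj fmap CopF ConstF FComp] in HH;
  first [erewrite <- HH | erewrite <- (ra_lem HH)]; clear HH.


Section TT.
Context {A : Category} (S : Coproducts A) (G : Functor A A) (It : Iteratable S G).
Implicit Types X Y Z W : Ob A.

Notation T := (TG S It).
Notation out := (outG S It).
Notation inn := (inG S It).

Lemma out_in X : out X ∘ inn X = idm _.
Proof. exact (tc_str_inv (It X)). Qed.
Lemma in_out X : inn X ∘ out X = idm _.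
Proof. exact (tc_inv_str (It X)). Qed.
Lemma out_in' X W (x : Hom W _) : out X ∘ (inn X ∘ x) = x.
Proof. rewrite comp_assoc, out_in, comp_id_l; reflexivity. Qed.
Lemma in_out' X W (x : Hom W _) : inn X ∘ (out X ∘ x) = x.
Proof. rewrite comp_assoc, in_out, comp_id_l; reflexivity. Qed.
Lemma expand_T X W (x : Hom W (T X)) : x = inn X ∘ (out X ∘ x).
Proof. rewrite in_out'; reflexivity. Qed.

Lemma in_def X : inn X = copair S (tauG S It X) (etaG S It X).
Proof. apply copair_unique; reflexivity. Qed.

Lemma TGmap_out {X Y} (f : Hom X Y) :
  out Y ∘ TGmap S It f = copmap S (fmap G (TGmap S It f)) f ∘ out X.
Proof.
  unfold TGmap. rewrite (tc_unfold_hom _ (It Y)). fold (TGmap S It f).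
  simpl. rewrite comp_assoc, <- copmap_comp, comp_id_r, comp_id_l. reflexivity.
Qed.

Lemma TGmap_in {X Y} (f : Hom X Y) :
  TGmap S It f ∘ inn X = inn Y ∘ copmap S (fmap G (TGmap S It f)) f.
Proof.
  rewrite (expand_T _ _ (TGmap S It f ∘ inn X)). rw (TGmap_out f).
  rewrite <- !comp_assoc, out_in, comp_id_r. reflexivity.
Qed.

Lemma TGmap_eta {X Y} (f : Hom X Y) :
  TGmap S It f ∘ etaG S It X = etaG S It Y ∘ f.
Proof. unfold etaG. rewrite comp_assoc, TGmap_in. cs. reflexivity. Qed.
Lemma TGmap_tau {X Y} (f : Hom X Y) :
  TGmap S It f ∘ tauG S It X = tauG S It Y ∘ fmap G (TGmap S It f).
Proof. unfold tauG. rewrite comp_assoc, TGmap_in. cs. reflexivity. Qed.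

Lemma h_expand {Y Z : A} (h : Hom (T Y) Z) :
  h = copair S (h ∘ tauG S It Y) (h ∘ etaG S It Y) ∘ out Y.
Proof. rewrite <- copair_comp, <- in_def, <- comp_assoc, in_out, comp_id_r. reflexivity. Qed.

Lemma out_tau X : out X ∘ tauG S It X = cinl S _ _.
Proof. unfold tauG. rewrite comp_assoc, out_in, comp_id_l. reflexivity. Qed.
Lemma out_eta X : out X ∘ etaG S It X = cinr S _ _.
Proof. unfold etaG. rewrite comp_assoc, out_in, comp_id_l. reflexivity. Qed.

(* coinductive uniqueness for maps into T X *)
Lemma UT {X Y} (g : Hom Y (T X)) (h1 h2 : Hom (T Y) (T X)) :
  h1 ∘ etaG S It Y = g -> h1 ∘ tauG S It Y = tauG S It X ∘ fmap G h1 ->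
  h2 ∘ etaG S It Y = g -> h2 ∘ tauG S It Y = tauG S It X ∘ fmap G h2 ->
  h1 = h2.
Proof.
  intros E1 T1 E2 T2.
  set (TX := T X). set (TY := T Y).
  set (base := copmap S (fmap G (cinr S TY TX)) (idm X) ∘ out X).
  set (delta := copair S (copair S (cinl S _ X ∘ fmap G (cinl S TY TX)) (base ∘ g) ∘ out Y) base).
  assert (K : forall h, h ∘ etaG S It Y = g -> h ∘ tauG S It Y = tauG S It X ∘ fmap G h ->
     copair S h (idm TX) = tc_unfold (It X) delta).
  { intros h Eh Th. apply (tc_unfold_unique _ (It X)). change (tc_str (It X)) with (out X).
    apply copair_ext.
    - subst delta base. cs. rewrite (h_expand h) at 1. rewrite Eh, Th. cs.
      rw (out_tau X). reflexivity.
    - subst delta base. cs. reflexivity. }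
  rewrite <- (copair_inl S h1 (idm TX)), <- (copair_inl S h2 (idm TX)), (K h1), (K h2); auto.
Qed.

Lemma mu_props X :
  muG S It X ∘ etaG S It (T X) = idm _ /\ muG S It X ∘ tauG S It (T X) = tauG S It X ∘ fmap G (muG S It X).
Proof.
  unfold muG. cbv zeta.
  set (base := copmap S (fmap G (cinr S (T (T X)) (T X))) (idm X) ∘ out X).
  set (delta := copair S (copair S (cinl S (G (cop S (T (T X)) (T X))) X ∘ fmap G (cinl S (T (T X)) (T X))) base
                 ∘ out (T X)) base).
  set (F := tc_unfold (It X) delta).
  assert (HF : out X ∘ F = copmap S (fmap G F) (idm X) ∘ delta).
  { exact (tc_unfold_hom _ (It X) _ delta). }
  assert (Fr : F ∘ cinr S (T (T X)) (T X) = idm _).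
  { apply (tc_ext (It X) (out X)); change (tc_str (It X)) with (out X).
    - rewrite (ra_lem HF). subst delta base. cs. reflexivity.
    - cs. reflexivity. }
  split.
  - rewrite (expand_T X _ (F ∘ _ ∘ _)). cs. rw HF. subst delta. cs.
    rw (out_eta (T X)). cs. subst base. cs. rw Fr. cs. apply in_out.
  - rewrite (expand_T X _ (F ∘ _ ∘ _)). cs. rw HF. subst delta. cs.
    rw (out_tau (T X)). cs. unfold tauG. cs. reflexivity.
Qed.

Lemma mu_eta X : muG S It X ∘ etaG S It (T X) = idm _.
Proof. apply mu_props. Qed.
Lemma mu_tau X : muG S It X ∘ tauG S It (T X) = tauG S It X ∘ fmap G (muG S It X).
Proof. apply mu_props. Qed.

Ltac tsimp := repeat (cs; first
  [ rw (mu_eta _) | rw (mu_tau _) | rw (TGmap_eta _) | rw (TGmap_tau _) ]); cs.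

Lemma mu_Teta X : muG S It X ∘ TGmap S It (etaG S It X) = idm _.
Proof.
  apply (UT (etaG S It X)).
  - tsimp. reflexivity.
  - tsimp. reflexivity.
  - cs; reflexivity.
  - cs; reflexivity.
Qed.

Lemma mu_assoc X : muG S It X ∘ TGmap S It (muG S It X) = muG S It X ∘ muG S It (T X).
Proof.
  apply (UT (muG S It X)); tsimp; reflexivity.
Qed.

Lemma mu_nat {X Y} (f : Hom X Y) :
  muG S It Y ∘ TGmap S It (TGmap S It f) = TGmap S It f ∘ muG S It X.
Proof.
  apply (UT (TGmap S It f)); tsimp; reflexivity.
Qed.

Lemma kappa_nat {X Y} (f : Hom X Y) :
  TGmap S It f ∘ kappaG S It X = kappaG S It Y ∘ fmap G f.
Proof. unfold kappaG. tsimp. reflexivity. Qed.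

Lemma mu_kappa X : muG S It X ∘ kappaG S It (T X) = tauG S It X.
Proof. unfold kappaG. tsimp. reflexivity. Qed.

End TT.

Section RPS2.
Context {A : Category} (S : Coproducts A) (L V : Functor A A) (It : Iteratable S (CopF S L V)).
Context {X0 : A} (a : Hom (L X0) X0) (Ha : is_cia S L a).
Context (fg : forall X : A, Hom (V X) (L (TG S It X))).
Context (fnat : forall (X Y : A) (g : Hom X Y), fmap L (TGmap S It g) ∘ fg X = fg Y ∘ fmap V g).
Notation T := (TG S It).
Notation G := (CopF S L V).

Lemma flat_uniq {Y : A} (E : Hom (cop S (G (T Y)) Y) (cop S (L (T Y)) X0))
  (h1 h2 : Hom (T Y) X0) :
  h1 ∘ inG S It Y = copair S a (idm X0) ∘ copmap S (fmap L h1) (idm X0) ∘ E ->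
  h2 ∘ inG S It Y = copair S a (idm X0) ∘ copmap S (fmap L h2) (idm X0) ∘ E ->
  h1 = h2.
Proof.
  intros E1 E2.
  destruct (Ha (T Y) (E ∘ outG S It Y)) as [h [_ U]].
  transitivity h; [symmetry|]; apply U.
  - rewrite comp_assoc, <- E1, <- comp_assoc, in_out, comp_id_r. reflexivity.
  - rewrite comp_assoc, <- E2, <- comp_assoc, in_out, comp_id_r. reflexivity.
Qed.

Lemma flat_ex {Y : A} (E : Hom (cop S (G (T Y)) Y) (cop S (L (T Y)) X0)) :
  exists h : Hom (T Y) X0,
  h ∘ inG S It Y = copair S a (idm X0) ∘ copmap S (fmap L h) (idm X0) ∘ E.
Proof.
  destruct (Ha (T Y) (E ∘ outG S It Y)) as [h [Eh _]].
  exists h. rewrite Eh at 1. rewrite <- !comp_assoc, out_in, comp_id_r. reflexivity.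
Qed.

Definition TauEq {Y : A} (h : Hom (T Y) X0) : Prop :=
  h ∘ tauG S It Y = copair S (a ∘ fmap L h) (a ∘ (fmap L (h ∘ muG S It Y) ∘ fg (T Y))).

Definition EtaEq {Y : A} (r : Hom Y (cop S (L (T Y)) X0)) (h : Hom (T Y) X0) : Prop :=
  h ∘ etaG S It Y = copair S (a ∘ fmap L h) (idm X0) ∘ r.

Definition Efor {Y : A} (r : Hom Y (cop S (L (T Y)) X0)) :=
  copair S (copair S (cinl S (L (T Y)) X0) (cinl S _ X0 ∘ (fmap L (muG S It Y) ∘ fg (T Y)))) r.

Lemma flat_char {Y : A} (r : Hom Y (cop S (L (T Y)) X0)) (h : Hom (T Y) X0) :
  TauEq h -> EtaEq r h ->
  h ∘ inG S It Y = copair S a (idm X0) ∘ copmap S (fmap L h) (idm X0) ∘ Efor r.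
Proof.
  unfold TauEq, EtaEq, Efor; intros E1 E2.
  rewrite in_def, copair_comp, E1, E2. cs. reflexivity.
Qed.

Lemma flat_uniq3 {Y : A} (r : Hom Y (cop S (L (T Y)) X0)) (h1 h2 : Hom (T Y) X0) :
  TauEq h1 -> EtaEq r h1 -> TauEq h2 -> EtaEq r h2 -> h1 = h2.
Proof.
  intros. apply (flat_uniq (Efor r)); apply flat_char; auto.
Qed.

Lemma flat_ex3 {Y : A} (r : Hom Y (cop S (L (T Y)) X0)) :
  exists h : Hom (T Y) X0, TauEq h /\ EtaEq r h.
Proof.
  destruct (flat_ex (Efor r)) as [h Eh]. exists h. unfold TauEq, EtaEq, Efor in *.
  split.
  - unfold tauG. rewrite comp_assoc, Eh. cs. reflexivity.
  - unfold etaG. rewrite comp_assoc, Eh. cs. reflexivity.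
Qed.


Lemma part2 (e : forall X : A, Hom (V X) (T X))
  (efg : forall X : A, e X = tauG S It X ∘ cinl S (L (T X)) (V (T X)) ∘ fg X) :
  exists s : Hom (V X0) X0,
    is_interpreted_solution S L V It e a s /\
    (forall s', is_interpreted_solution S L V It e a s' -> s' = s) /\
    is_cia S G (copair S a s).
Proof.
  destruct (flat_ex3 (cinr S (L (T X0)) X0)) as [β [Bt Be]].
  unfold TauEq, EtaEq in *. cs_in Be.
  assert (C1 : forall (Y : A) (g : Hom Y X0), TauEq (β ∘ TGmap S It g)).
  { intros Y g. unfold TauEq. rewrite <- comp_assoc, (TGmap_tau S _ It), comp_assoc, Bt.
    cs. rw <- (fnat _ _ _). cs. rw (mu_nat S _ It _). reflexivity. }
  assert (EM2 : β ∘ muG S It X0 = β ∘ TGmap S It β).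
  { apply (flat_uniq3 (Y := T X0) (cinr S _ X0 ∘ β)).
    - unfold TauEq. cs. rw (mu_tau S _ It). rw Bt. cs. rw <- (fnat _ _ _). cs.
      rw (mu_assoc S _ It _). reflexivity.
    - unfold EtaEq. cs. rw (mu_eta S _ It). cs. reflexivity.
    - apply C1.
    - unfold EtaEq. cs. rw (TGmap_eta S _ It β). rw Be. cs. reflexivity. }
  set (s := a ∘ (fmap L β ∘ fg X0)).
  assert (Bt2 : β ∘ tauG S It X0 = copair S a s ∘ fmap G β).
  { rewrite Bt. subst s. cs. rewrite EM2. rw <- (fnat _ _ _). cs. reflexivity. }
  assert (Bk : β ∘ kappaG S It X0 = copair S a s).
  { unfold kappaG. rw Bt2. cs. rw Be. cs. reflexivity. }
  exists s. split; [| split].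
  - exists β. split; [split; assumption | split; [exact Bk | ]].
    rewrite efg. cs. rw Bt2. cs. reflexivity.
  - intros s' [β' [[E1 E2] [K' Hs']]].
    assert (Bt' : β' ∘ tauG S It X0 = copair S a s' ∘ fmap G β').
    { rewrite <- (mu_kappa S _ It X0). rewrite comp_assoc, E2, <- comp_assoc, (kappa_nat S _ It),
        comp_assoc, K'. reflexivity. }
    assert (Hs2 : s' = a ∘ (fmap L β' ∘ fg X0)).
    { rewrite Hs' at 1. rewrite efg. cs. rw Bt'. cs. reflexivity. }
    assert (Eb : β' = β).
    { apply (flat_uniq3 (Y:=X0) (cinr S _ X0)).
      - unfold TauEq. rewrite Bt'. cs. rewrite Hs2. cs. rw <- (fnat _ _ _). cs.
        rewrite E2. reflexivity.
      - unfold EtaEq. rewrite E1. cs. reflexivity.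
      - exact Bt.
      - unfold EtaEq. rewrite Be. cs. reflexivity. }
    subst β'. rewrite Hs2. reflexivity.
  - intros Y e'.
    pose (u := tc_unfold (It X0) e').
    assert (Hu : outG S It X0 ∘ u = copmap S (fmap G u) (idm X0) ∘ e')
      by exact (tc_unfold_hom _ (It X0) _ e').
    pose (r := copair S (copair S (cinl S _ X0 ∘ fmap L (etaG S It Y)) (cinl S _ X0 ∘ fg Y))
                  (cinr S _ X0) ∘ e').
    assert (Sol : forall h : Hom Y X0,
      h = copair S (copair S a s) (idm X0) ∘ copmap S (fmap G h) (idm X0) ∘ e' ->
      TauEq (β ∘ TGmap S It h) /\ EtaEq r (β ∘ TGmap S It h)).
    { intros h Hh. split; [apply C1|].
      unfold EtaEq, r. cs. rw (TGmap_eta S _ It h). rw Be. cs.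
      rewrite Hh at 1. unfold s. cs. rw <- (fnat _ _ _). cs. reflexivity. }
    assert (Ev : forall h : Hom Y X0, β ∘ TGmap S It h ∘ etaG S It Y = h).
    { intros h. cs. rw (TGmap_eta S _ It h). rw Be. cs. reflexivity. }
    assert (Eu : β ∘ u = copair S (copair S a s) (idm X0) ∘ copmap S (fmap G (β ∘ u)) (idm X0) ∘ e').
    { rewrite (h_expand S _ It β) at 1. rewrite Bt2, Be. cs. rw Hu. cs. reflexivity. }
    exists (β ∘ u). split; [exact Eu|].
    intros h Hh.
    destruct (Sol h Hh) as [T1 E1]. destruct (Sol (β ∘ u) Eu) as [T2 E2].
    rewrite <- (Ev h), <- (Ev (β ∘ u)).
    rewrite (flat_uniq3 r _ _ T1 E1 T2 E2). reflexivity.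
Qed.

End RPS2.

Section FMlemmas.
Context {A : Category} {K : Functor A A} (m : FreeMonadOn K).
Notation M := (FM m).

Lemma fm_ext_eta' {X Y W : A} (a : Hom (K Y) Y) (f : Hom X Y) (x : Hom W X) :
  fm_ext m a f ∘ (fm_eta m X ∘ x) = f ∘ x.
Proof. rewrite comp_assoc, fm_ext_eta; reflexivity. Qed.
Lemma fm_ext_hom' {X Y W : A} (a : Hom (K Y) Y) (f : Hom X Y) (x : Hom W _) :
  fm_ext m a f ∘ (fm_phi m X ∘ x) = a ∘ (fmap K (fm_ext m a f) ∘ x).
Proof. rewrite comp_assoc, fm_ext_hom, comp_assoc; reflexivity. Qed.
Lemma fm_eta_nat' {X Y W : A} (f : Hom X Y) (x : Hom W X) :
  fmap M f ∘ (fm_eta m X ∘ x) = fm_eta m Y ∘ (f ∘ x).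
Proof. rewrite comp_assoc, fm_eta_nat, comp_assoc; reflexivity. Qed.

Lemma ext_eq {X Y : A} (a : Hom (K Y) Y) (f : Hom X Y) (h1 h2 : Hom (M X) Y) :
  h1 ∘ fm_eta m X = f -> h1 ∘ fm_phi m X = a ∘ fmap K h1 ->
  h2 ∘ fm_eta m X = f -> h2 ∘ fm_phi m X = a ∘ fmap K h2 -> h1 = h2.
Proof.
  intros. rewrite (fm_ext_unique _ m _ _ a f h1), (fm_ext_unique _ m _ _ a f h2); auto.
Qed.

Lemma ext_M {X X' Y : A} (a : Hom (K Y) Y) (f : Hom X' Y) (g : Hom X X') :
  fm_ext m a f ∘ fmap M g = fm_ext m a (f ∘ g).
Proof.
  apply fm_ext_unique.
  - rewrite <- comp_assoc, fm_eta_nat, comp_assoc, fm_ext_eta. reflexivity.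
  - rewrite <- comp_assoc, fm_phi_nat, comp_assoc, fm_ext_hom, <- comp_assoc, <- fmap_comp.
    reflexivity.
Qed.

Lemma sharp_M {X Y : A} (a : Hom (K Y) Y) (f : Hom X Y) :
  sharp m a ∘ fmap M f = fm_ext m a f.
Proof. unfold sharp. rewrite ext_M, comp_id_l. reflexivity. Qed.

Definition mu (X : A) : Hom (M (M X)) (M X) := fm_ext m (fm_phi m X) (idm (M X)).

Lemma mu_eta1 X : mu X ∘ fm_eta m (M X) = idm _.
Proof. apply fm_ext_eta. Qed.
Lemma mu_phi1 X : mu X ∘ fm_phi m (M X) = fm_phi m X ∘ fmap K (mu X).
Proof. apply fm_ext_hom. Qed.

Lemma algmu {Y Z : A} (bz : Hom (K Z) Z) (w : Hom (M Y) Z) :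
  w ∘ fm_phi m Y = bz ∘ fmap K w -> w ∘ mu Y = fm_ext m bz w.
Proof.
  intros Hw. apply fm_ext_unique.
  - rewrite <- comp_assoc, mu_eta1, comp_id_r. reflexivity.
  - rewrite <- comp_assoc, mu_phi1, comp_assoc, Hw, <- comp_assoc, <- fmap_comp. reflexivity.
Qed.

Lemma mu_assoc1 X : mu X ∘ mu (M X) = mu X ∘ fmap M (mu X).
Proof.
  rewrite (algmu (fm_phi m X) (mu X) (mu_phi1 X)). unfold mu at 2. rewrite ext_M, comp_id_l.
  reflexivity.
Qed.

Lemma phi_decomp X : fm_phi m X = mu X ∘ (fm_phi m (M X) ∘ fmap K (fm_eta m (M X))).
Proof.
  rewrite comp_assoc, mu_phi1, <- comp_assoc, <- fmap_comp, mu_eta1, fmap_id, comp_id_r.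
  reflexivity.
Qed.
End FMlemmas.

Global Hint Rewrite @fm_ext_eta @fm_ext_eta' @fm_ext_hom @fm_ext_hom' @fm_eta_nat @fm_eta_nat'
  @tc_str_inv : cat.

Lemma tc_str_inv' {A : Category} {F : Functor A A} (t : TerminalCoalgebra F) {W : A} (x : Hom W _) :
  tc_str t ∘ (tc_inv t ∘ x) = x.
Proof. rewrite comp_assoc, tc_str_inv, comp_id_l; reflexivity. Qed.
Global Hint Rewrite @tc_str_inv' : cat.

Section GS.
Context {A : Category} (P : Products A) (S : Coproducts A) (H K : Functor A A)
  (m : FreeMonadOn K) (l : forall X : A, Hom (K (prod P (H X) X)) (H (FM m X)))
  (Hl : is_GSOS_rule P H K m l) (Ct : TerminalCoalgebra H) (b : Hom (K (tc_car Ct)) (tc_car Ct))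
  (Hbeq : interpretation_eq P H K m Ct l b).
Notation M := (FM m).
Notation C := (tc_car Ct).
Notation c := (tc_str Ct).

Definition gam (Z : A) : Hom (K (prod P (H (M Z)) (M Z))) (prod P (H (M Z)) (M Z)) :=
  pair P (fmap H (mu m Z) ∘ l (M Z)) (fm_phi m Z ∘ fmap K (pr2 P _ _)).

Definition ext_l {Z : A} (ζ : Hom Z (H (M Z))) : Hom (M Z) (H (M Z)) :=
  pr1 P _ _ ∘ fm_ext m (gam Z) (pair P ζ (fm_eta m Z)).

Lemma ext_l_pair {Z : A} (ζ : Hom Z (H (M Z))) :
  fm_ext m (gam Z) (pair P ζ (fm_eta m Z)) = pair P (ext_l ζ) (idm _).
Proof.
  apply pair_unique; [reflexivity|].
  apply (ext_eq m (fm_phi m Z) (fm_eta m Z)).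
  - cs. reflexivity.
  - unfold gam. cs. reflexivity.
  - cs. reflexivity.
  - cs. reflexivity.
Qed.

Lemma ext_l_eta {Z : A} (ζ : Hom Z (H (M Z))) : ext_l ζ ∘ fm_eta m Z = ζ.
Proof. unfold ext_l. cs. reflexivity. Qed.

Lemma ext_l_phi {Z : A} (ζ : Hom Z (H (M Z))) :
  ext_l ζ ∘ fm_phi m Z = fmap H (mu m Z) ∘ (l (M Z) ∘ fmap K (pair P (ext_l ζ) (idm _))).
Proof.
  unfold ext_l at 1. rewrite <- comp_assoc, fm_ext_hom, ext_l_pair. unfold gam. cs. reflexivity.
Qed.


Lemma L1 {Y : A} (Θ : Hom Y (H (M Y))) (w0 : Hom Y C) :
  c ∘ w0 = fmap H (fm_ext m b w0) ∘ Θ ->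
  c ∘ fm_ext m b w0 = fmap H (fm_ext m b w0) ∘ ext_l Θ.
Proof.
  intros Hyp.
  set (w := fm_ext m b w0).
  set (β' := pair P (fmap H (sharp m b) ∘ l C) (b ∘ fmap K (pr2 P (H C) C))).
  assert (Ew : w ∘ mu m Y = sharp m b ∘ fmap M w).
  { rewrite sharp_M. apply algmu. subst w. apply fm_ext_hom. }
  assert (E : pair P (c ∘ w) w = pair P (fmap H w ∘ ext_l Θ) w).
  { apply (ext_eq m β' (pair P (c ∘ w0) w0)).
    - subst w. cs. reflexivity.
    - subst w β'. cs. rw Hbeq. cs. reflexivity.
    - subst w. cs. rw (ext_l_eta Θ). rewrite <- Hyp. cs. reflexivity.
    - cs. rw (ext_l_phi Θ). cs. rewrite Ew.
      rewrite (fmap_comp H (sharp m b) (fmap M w)), <- (comp_assoc (fmap H (sharp m b))). rw (Hl _ _ w). subst β'. cs. subst w. cs. reflexivity. }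
  apply (f_equal (fun z => pr1 P _ _ ∘ z)) in E. cs_in E. exact E.
Qed.


Lemma AH {Z : A} (ζ : Hom Z (H (M Z))) :
  tc_unfold Ct (ext_l ζ) = fm_ext m b (tc_unfold Ct (ext_l ζ) ∘ fm_eta m Z).
Proof.
  set (u := tc_unfold Ct (ext_l ζ)).
  assert (Hu : c ∘ u = fmap H u ∘ ext_l ζ) by apply tc_unfold_hom.
  set (Ξ := ext_l (fmap H (fm_eta m (M Z)) ∘ ext_l ζ)).
  assert (Ea : ext_l ζ ∘ mu m Z = fmap H (mu m Z) ∘ Ξ).
  { assert (E : pair P (ext_l ζ ∘ mu m Z) (mu m Z) = pair P (fmap H (mu m Z) ∘ Ξ) (mu m Z)).
    { apply (ext_eq m (gam Z) (pair P (ext_l ζ) (idm _))).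
      - cs. rw (mu_eta1 m). cs. reflexivity.
      - cs. rw (mu_phi1 m). rw (ext_l_phi ζ). unfold gam. cs. reflexivity.
      - subst Ξ. cs. rw (ext_l_eta (fmap H (fm_eta m (M Z)) ∘ ext_l ζ)). cs. rw (mu_eta1 m). cs.
        reflexivity.
      - subst Ξ. cs. rw (ext_l_phi (fmap H (fm_eta m (M Z)) ∘ ext_l ζ)). cs.
        rw (mu_assoc1 m Z).
        rewrite (fmap_comp H (mu m Z) (fmap M (mu m Z))), <- (comp_assoc (fmap H (mu m Z))).
        rw (Hl _ _ (mu m Z)). unfold gam. cs. rw (mu_phi1 m Z). reflexivity. }
    apply (f_equal (fun z => pr1 P _ _ ∘ z)) in E. cs_in E. exact E. }
  assert (Eb : u ∘ mu m Z = tc_unfold Ct Ξ).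
  { apply tc_unfold_unique. cs. rw Hu. cs. rw Ea. cs. reflexivity. }
  assert (Ec : fm_ext m b u = tc_unfold Ct Ξ).
  { apply tc_unfold_unique. apply L1. rewrite Hu. cs. reflexivity. }
  assert (Halg : u ∘ fm_phi m Z = b ∘ fmap K u).
  { rewrite (phi_decomp m Z). cs. rw Eb. rw <- Ec. cs. reflexivity. }
  apply fm_ext_unique; [reflexivity | exact Halg].
Qed.


Lemma c_mono {X : A} (x y : Hom X C) : c ∘ x = c ∘ y -> x = y.
Proof.
  intros E. rewrite <- (comp_id_l x), <- (comp_id_l y), <- (tc_inv_str Ct), <- !comp_assoc, E.
  reflexivity.
Qed.

Lemma part1 : is_cia S (FComp H M) (tc_inv Ct ∘ fmap H (sharp m b)).
Proof.
  intros Y e.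
  set (ζ := copair S (copair S (fmap H (fmap M (cinl S Y C))) (fmap H (fm_eta m (cop S Y C) ∘ cinr S Y C) ∘ c) ∘ e)
                     (fmap H (fm_eta m (cop S Y C) ∘ cinr S Y C) ∘ c) : Hom (cop S Y C) (H (M (cop S Y C)))).
  set (u := tc_unfold Ct (ext_l ζ)).
  assert (Hu : c ∘ u = fmap H u ∘ ext_l ζ) by apply tc_unfold_hom.
  assert (AHu : u = fm_ext m b (u ∘ fm_eta m (cop S Y C))) by apply AH.
  assert (Ur : u ∘ (fm_eta m (cop S Y C) ∘ cinr S Y C) = idm C).
  { apply (tc_ext Ct c).
    - rw Hu. cs. rw (ext_l_eta ζ). subst ζ. cs. reflexivity.
    - cs. reflexivity. }
  set (h := u ∘ (fm_eta m (cop S Y C) ∘ cinl S Y C)).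
  assert (uMinl : u ∘ fmap M (cinl S Y C) = fm_ext m b h).
  { rewrite AHu at 1. rewrite ext_M. subst h. cs. reflexivity. }
  exists h. split.
  - apply c_mono. subst h. cs. rw Hu. cs. rw (ext_l_eta ζ). subst ζ. cs. rw Ur. cs.
    rw uMinl. rw (sharp_M m b). reflexivity.
  - intros h' Hh'.
    set (w := fm_ext m b (copair S h' (idm C))).
    assert (Hyp : c ∘ copair S h' (idm C) = fmap H w ∘ ζ).
    { apply copair_ext.
      - cs. rewrite Hh' at 1. cs. rw (sharp_M m b). subst ζ w. cs. rw ext_M. cs. reflexivity.
      - subst ζ w. cs. reflexivity. }
    assert (Ew : w = u).
    { apply tc_unfold_unique. apply L1. exact Hyp. }
    subst h. rewrite <- Ew. subst w. cs. reflexivity.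
Qed.

End GS.

Theorem mainTheorem6
  (A : Category) (P : Products A) (S : Coproducts A)
  (H : Functor A A) (Ct : TerminalCoalgebra H)
  (K : Functor A A) (m : FreeMonadOn K)
  (l : forall X : A, Hom (K (prod P (H X) X)) (H (FM m X)))
  (Hl : is_GSOS_rule P H K m l)
  (b : Hom (K (tc_car Ct)) (tc_car Ct))
  (Hb : is_interpretation P H K m Ct l b)
  (V : Functor A A)
  (It : Iteratable S (CopF S (FComp H (FM m)) V))
  (e : forall X : A, Hom (V X) (TG S It X))
  (He : is_rps S (FComp H (FM m)) V It e)
  (Hg : is_guarded_rps S (FComp H (FM m)) V It e) :
  let k : Hom (H (FM m (tc_car Ct))) (tc_car Ct) :=
      tc_inv Ct ∘ fmap H (sharp m b) in
  exists s : Hom (V (tc_car Ct)) (tc_car Ct),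
    is_interpreted_solution S (FComp H (FM m)) V It e k s /\
    (forall s' : Hom (V (tc_car Ct)) (tc_car Ct),
        is_interpreted_solution S (FComp H (FM m)) V It e k s' -> s' = s) /\
    is_cia S (CopF S (FComp H (FM m)) V) (copair S k s).
Proof.
  intros k. destruct Hg as [fg [fnat efg]]. destruct Hb as [Hbeq _].
  exact (part2 S (FComp H (FM m)) V It k (part1 P S H K m l Hl Ct b Hbeq) fg fnat e efg).
Qed.
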